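(* Consider the mining game with $N\ge 2$ miners, costs-per-hash $0<c_1\le\dots\le c_N$, reward $R>0$ and capacity parameter $\gamma\ge0$, let $h^*$ be its unique equilibrium hash rate profile, $H^*=\sum_j h_j^*>0$, and let $n$ be the number of active miners. Define the equilibrium marginal cost of miner $i$ by $MC_i^*:=c_i+\gamma h_i^*$, $1\le i\le N$. Then $(MC_i^* )_{1\le i\le N}$ is an increasing sequence, and for each $i$, $$MC_i^*<\frac{R}{H^*}\iff c_i<\frac{R}{H^*}\iff 1\le i\le n.$$ Moreover, the sequence $(c_i/MC_i^* )_{1\le i\le N}$ is increasing and the sequence $(\gamma h_i^*/MC_i^* )_{1\le i\le N}$ is decreasing.
   Context: Mining game: $N\ge2$ miners with costs-per-hash $0<c_1\le\dots\le c_N$; each miner $i$ chooses $h_i\ge0$, $H=\sum_j h_j$, and the payoff of miner $i$ is $\frac{h_i}{H}R-c_ih_i-\frac{\gamma}{2}h_i^2$ if $H>0$, and $0$ if $H=0$, where $R>0$ and $\gamma\ge 0$. An equilibrium hash rate profile is a pure-strategy Nash equilibrium $h^*\in[0,\infty)^N$ of this game; it exists and is unique. Miner $i$ is active if $h_i^*>0$. A sequence $(x_i)$ is called increasing if $x_i\le x_{i+1}$ for all $i$ and decreasing if $x_i\ge x_{i+1}$ for all $i$. *)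

(* Defs.v *)
(* reals as an abstract R : realFieldType. Miners are indexed
   by 'I_N (miner i of the paper is the ordinal i-1). *)
From mathcomp Require Import all_boot all_order all_algebra.
Set Implicit Arguments. Unset Strict Implicit. Unset Printing Implicit Defensive.
Import Order.TTheory GRing.Theory Num.Theory.
Local Open Scope ring_scope.

Section Mining.
Variables (R : realFieldType) (N : nat).

Definition total_hash (h : 'I_N -> R) : R := \sum_(j < N) h j.

Definition payoff (Rw gamma : R) (c : 'I_N -> R) (h : 'I_N -> R) (i : 'I_N) : R :=
  if 0 < total_hash h then
    h i / total_hash h * Rw - c i * h i - gamma / 2%:R * h i ^+ 2
  else 0.

Definition deviate (h : 'I_N -> R) (i : 'I_N) (x : R) : 'I_N -> R :=
  fun j => if j == i then x else h j.

Definition is_equilibrium (Rw gamma : R) (c : 'I_N -> R) (h : 'I_N -> R) : Prop :=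
  (forall i, 0 <= h i) /\
  (forall i (x : R), 0 <= x ->
     payoff Rw gamma c (deviate h i x) i <= payoff Rw gamma c h i).

Definition increasing_seq (x : 'I_N -> R) : Prop :=
  forall i j : 'I_N, nat_of_ord j = (nat_of_ord i).+1 -> x i <= x j.

Definition decreasing_seq (x : 'I_N -> R) : Prop :=
  forall i j : 'I_N, nat_of_ord j = (nat_of_ord i).+1 -> x j <= x i.

Definition num_active (h : 'I_N -> R) : nat := #|[set i : 'I_N | 0 < h i]|.

End Mining.

(* Main.v *)
Require Import Defs.
From mathcomp Require Import all_boot all_order all_algebra.
From mathcomp Require Import ring lra.
Import Order.TTheory GRing.Theory Num.Theory.
Local Open Scope ring_scope.
Section Foc.
Variable R : realFieldType.

Lemma foc_up (Rw c g H h : R) : 0 < Rw -> 0 < c -> 0 <= g -> 0 < H -> 0 <= h -> h <= H ->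
  (forall x, 0 <= x -> 0 < H - h + x ->
     x / (H - h + x) * Rw - c * x - g / 2%:R * x ^+ 2 <= h / H * Rw - c * h - g / 2%:R * h ^+ 2) ->
  Rw * (H - h) / H ^+ 2 <= c + g * h.
Proof.
move=> Rp cp gp Hp hp hH hyp.
set a := Rw * (H - h) / H ^+ 2.
have a0 : 0 <= a by rewrite /a; apply: divr_ge0; [nra|nra].
rewrite leNgt; apply/negP => Hlt.
set D := a - (c + g * h).
have Dp : 0 < D by rewrite /D; lra.
have den : 0 < 2%:R * (a + g * H + D) by nra.
set t := D * H / (2%:R * (a + g * H + D)).
have tp : 0 < t by rewrite /t; apply: divr_gt0; nra.
have teq : t * (2%:R * (a + g * H + D)) = D * H by rewrite /t; field; lra.
have tH : t <= H by nra.
have := hyp (h + t) ltac:(lra) ltac:(lra).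
have -> : H - h + (h + t) = H + t by ring.
move=> key.
have eq : (h + t) / (H + t) * Rw - c * (h + t) - g / 2%:R * (h + t) ^+ 2
   - (h / H * Rw - c * h - g / 2%:R * h ^+ 2)
   = t * (a * H / (H + t) - (c + g * h) - g * t / 2%:R).
  by rewrite /a; field; lra.
have k2 : a * H / (H + t) - (c + g * h) - g * t / 2%:R <= 0.
  have : t * (a * H / (H + t) - (c + g * h) - g * t / 2%:R) <= 0 by rewrite -eq; lra.
  by rewrite pmulr_rle0.
have k3 : a * H <= (a - D + g * t / 2%:R) * (H + t).
  rewrite -ler_pdivrMr; last lra.
  by rewrite /D; lra.
have gtt : g * t * t <= g * t * H by apply: ler_wpM2l; nra.
nra.
Qed.

Lemma foc_down (Rw c g H h : R) : 0 < Rw -> 0 < c -> 0 <= g -> 0 < H -> 0 < h -> h <= H ->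
  (forall x, 0 <= x -> 0 < H - h + x ->
     x / (H - h + x) * Rw - c * x - g / 2%:R * x ^+ 2 <= h / H * Rw - c * h - g / 2%:R * h ^+ 2) ->
  c + g * h <= Rw * (H - h) / H ^+ 2.
Proof.
move=> Rp cp gp Hp hp hH hyp.
set a := Rw * (H - h) / H ^+ 2.
have a0 : 0 <= a by rewrite /a; apply: divr_ge0; [nra|nra].
rewrite leNgt; apply/negP => Hlt.
set D := c + g * h - a.
have Dp : 0 < D by rewrite /D; lra.
have den : 0 < 2%:R * (a + D + g * H) by nra.
set t := D * h / (2%:R * (a + D + g * H)).
have tp : 0 < t by rewrite /t; apply: divr_gt0; nra.
have teq : t * (2%:R * (a + D + g * H)) = D * h by rewrite /t; field; lra.
have th : t * 2%:R <= h.
  have : 0 <= (h - t * 2%:R) * (2%:R * (a + D + g * H)).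
    have -> : (h - t * 2%:R) * (2%:R * (a + D + g * H)) = 2%:R * h * (a + g * H) + 2%:R * (h * D - t * (2%:R * (a + D + g * H))) by ring.
    rewrite teq; have : 0 <= g * H by nra.
    move=> ?; have : 0 <= h * (a + g * H) by nra.
    move=> ?; nra.
  rewrite pmulr_lge0 //; lra.
have := hyp (h - t) ltac:(lra) ltac:(lra).
have -> : H - h + (h - t) = H - t by ring.
move=> key.
have eq : (h - t) / (H - t) * Rw - c * (h - t) - g / 2%:R * (h - t) ^+ 2
   - (h / H * Rw - c * h - g / 2%:R * h ^+ 2)
   = - t * (a * H / (H - t) - (c + g * h) + g * t / 2%:R).
  by rewrite /a; field; lra.
have k2 : 0 <= a * H / (H - t) - (c + g * h) + g * t / 2%:R.
  have : 0 <= t * (a * H / (H - t) - (c + g * h) + g * t / 2%:R) by nra.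
  by rewrite pmulr_rge0.
have k3 : (a + D - g * t / 2%:R) * (H - t) <= a * H.
  rewrite -ler_pdivlMr; last lra.
  by rewrite /D; lra.
have gtt : 0 <= g * t * t by nra.
have gtH : 0 <= g * t * H by nra.
have Dh : D * h <= D * H by nra.
nra.
Qed.
End Foc.

Lemma dev_total (R : realFieldType) N (h : 'I_N -> R) i x :
  total_hash (deviate h i x) = total_hash h - h i + x.
Proof.
rewrite /total_hash (bigD1 i) //= [in RHS](bigD1 i) //= /deviate eqxx.
rewrite (eq_bigr (fun j => h j)); first by ring.
by move=> j /negbTE ->.
Qed.

Lemma hi_le_H (R : realFieldType) N (h : 'I_N -> R) i :
  (forall j, 0 <= h j) -> h i <= total_hash h.
Proof.
move=> h0; rewrite /total_hash (bigD1 i) //= lerDl.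
by apply: sumr_ge0 => j _.
Qed.

Lemma down_closed_card N (S : {set 'I_N}) :
  (forall i j : 'I_N, (i <= j)%N -> j \in S -> i \in S) ->
  forall i : 'I_N, i \in S <-> (i < #|S|)%N.
Proof.
move=> dc i; split.
- move=> iS.
  have Hi : (i.+1 <= N)%N by exact: ltn_ord.
  have sub : [set widen_ord Hi k | k : 'I_i.+1] \subset S.
    apply/subsetP => y /imsetP [k _ ->]; apply: (dc _ i) => //=.
    by rewrite -ltnS.
  have := subset_leq_card sub.
  rewrite card_imset ?card_ord //.
  by move=> a b /(congr1 val) /= /val_inj.
- move=> ltS; case: (boolP (i \in S)) => // niS.
  have Hi : (i <= N)%N by exact: ltnW (ltn_ord i).
  have sub : S \subset [set widen_ord Hi k | k : 'I_i].
    apply/subsetP => y yS.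
    have yi : (y < i)%N.
      rewrite ltnNge; apply/negP => iy; move/negP: niS; apply; exact: dc iy yS.
    apply/imsetP; exists (Ordinal yi) => //; exact: val_inj.
  have := subset_leq_card sub.
  rewrite card_imset ?card_ord.
    by rewrite leqNgt ltS.
  by move=> a b /(congr1 val) /= /val_inj.
Qed.
Lemma inc_mono (R : realFieldType) N (c : 'I_N -> R) :
  increasing_seq c -> forall i j : 'I_N, (i <= j)%N -> c i <= c j.
Proof.
move=> cinc.
suff: forall d (i j : 'I_N), nat_of_ord j = (i + d)%N -> c i <= c j.
  move=> H i j ij; apply: (H (j - i)%N); by rewrite subnKC.
elim=> [|d IH] i j ji.
  by have -> : j = i by apply: val_inj; rewrite /= ji addn0.
have lt : (i + d < N)%N by move: (ltn_ord j); rewrite ji addnS; apply: ltnW.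
apply: le_trans (IH i (Ordinal lt) erefl) _.
by apply: cinc; rewrite /= ji addnS.
Qed.

Theorem proposition4p2 (R : realFieldType) (N : nat) (Rw gamma : R)
    (c : 'I_N -> R) (h : 'I_N -> R) :
  (2 <= N)%N ->
  (forall i, 0 < c i) ->
  increasing_seq c ->
  0 < Rw ->
  0 <= gamma ->
  is_equilibrium Rw gamma c h ->
  let H := total_hash h in
  let MC := fun i => c i + gamma * h i in
  0 < H /\
  increasing_seq MC /\
  (forall i : 'I_N,
     (MC i < Rw / H <-> c i < Rw / H) /\
     (c i < Rw / H <-> (nat_of_ord i < num_active h)%N)) /\
  increasing_seq (fun i => c i / MC i) /\
  decreasing_seq (fun i => gamma * h i / MC i).
Proof.
move=> N2 cp cinc Rp gp [h0 heq] H MC.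
have H0 : 0 <= H by apply: sumr_ge0.
have Hp : 0 < H.
  rewrite lt_def H0 andbT; apply/negP => /eqP Hz.
  have hz : forall j, h j = 0.
    move=> j; apply: (psumr_eq0P (P := predT)) => //; by move=> k _.
  have N0 : (0 < N)%N by apply: leq_trans N2.
  set i0 : 'I_N := Ordinal N0.
  set x := Rw / (Rw + c i0 + gamma).
  have den : 0 < Rw + c i0 + gamma by have := cp i0; lra.
  have xp : 0 < x by apply: divr_gt0.
  have x1 : x < 1 by rewrite ltr_pdivrMr //; have := cp i0; lra.
  have xe : x * (Rw + c i0 + gamma) = Rw by rewrite /x; field; lra.
  have := heq i0 x (ltW xp).
  rewrite /payoff dev_total -/H Hz hz ltxx.
  have -> : 0 - 0 + x = x by ring.
  rewrite xp mulfV ?gt_eqF // mul1r.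
  have : x ^+ 2 <= x by rewrite expr2; nra.
  move=> x2.
  have g2 : gamma / 2%:R * x ^+ 2 <= gamma * x.
    have : gamma * x ^+ 2 <= gamma * x by apply: ler_wpM2l.
    have : 0 <= gamma * x ^+ 2 by apply: mulr_ge0 => //; apply: sqr_ge0.
    move=> ? ?; lra.
  have := cp i0.
  rewrite /deviate eqxx => *; nra.
have hyp : forall i x, 0 <= x -> 0 < H - h i + x ->
     x / (H - h i + x) * Rw - c i * x - gamma / 2%:R * x ^+ 2
       <= h i / H * Rw - c i * h i - gamma / 2%:R * h i ^+ 2.
  move=> i x x0 pos; have := heq i x x0.
  by rewrite /payoff dev_total -/H pos Hp /deviate eqxx.
have hH : forall i, h i <= H by move=> i; apply: hi_le_H.
have F1 : forall i, Rw * (H - h i) / H ^+ 2 <= c i + gamma * h i.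
  move=> i; exact: foc_up (cp i) gp Hp (h0 i) (hH i) (hyp i).
have F2 : forall i, 0 < h i -> c i + gamma * h i <= Rw * (H - h i) / H ^+ 2.
  move=> i hp; exact: foc_down (cp i) gp Hp hp (hH i) (hyp i).
set P := Rw / H.
set k := Rw / H ^+ 2.
have kp : 0 < k by apply: divr_gt0 => //; apply: exprn_gt0.
have PE : forall i, Rw * (H - h i) / H ^+ 2 = P - k * h i.
  by move=> i; rewrite /P /k; field; lra.
have act : forall i, 0 < h i <-> c i < P.
  move=> i; split.
    move=> hp; have := F1 i; have := F2 i hp; rewrite PE => *.
    have := h0 i; nra.
  move=> cP; rewrite lt_def h0 andbT; apply/negP => /eqP hz.
  by have := F1 i; rewrite PE hz; lra.
have cases : forall i, h i = 0 \/ 0 < h i.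
  by move=> i; have := h0 i; rewrite le_eqVlt => /orP [/eqP ->|]; [left|right].
have MCa : forall i, 0 < h i -> MC i = P - k * h i.
  move=> i hp; apply/eqP; rewrite eq_le -!PE F2 // F1 //.
have MCp : forall i, 0 < MC i by move=> i; rewrite /MC; have := cp i; have := h0 i; nra.
have hdec : forall i j, c i <= c j -> h j <= h i.
  move=> i j cij; case: (cases j) => [->|hj]; first exact: h0.
  have hi : 0 < h i by apply/act; have := (act j).1 hj; lra.
  have := MCa i hi; have := MCa j hj; rewrite /MC => *; nra.
split => //.
split.
  move=> i j ji; have cij := cinc i j ji.
  case: (cases j) => [hj|hj].
    have : P <= c j by have := F1 j; rewrite PE hj; lra.
    rewrite /MC hj mulr0 addr0.
    case: (cases i) => [hi|hi]; first by rewrite hi mulr0 addr0.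
    have := MCa i hi; rewrite /MC; nra.
  have hi : 0 < h i by apply/act; have := (act j).1 hj; lra.
  rewrite (MCa i hi) (MCa j hj); have := hdec i j cij; nra.
have cMC : forall i j : 'I_N, nat_of_ord j = (nat_of_ord i).+1 -> c i / MC i <= c j / MC j.
  move=> i j ji; have cij := cinc i j ji; have hij := hdec i j cij.
  rewrite ler_pdivrMr // mulrAC ler_pdivlMr //.
  rewrite /MC.
  have : c i * h j <= c j * h i.
    apply: le_trans (_ : c j * h j <= _); first by apply: ler_wpM2r.
    by apply: ler_wpM2l => //; apply: ltW.
  move=> ?; have := cp i; have := cp j; nra.
split.
  move=> i; split.
    split; last by move=> cP; have hp := (act i).2 cP; rewrite (MCa i hp); nra.
    move=> MCP; case: (cases i) => [hi|hi].
      by move: MCP; rewrite /MC hi mulr0 addr0.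
    exact/act.
  have dc : forall a b : 'I_N, (a <= b)%N -> b \in [set j | 0 < h j] -> a \in [set j | 0 < h j].
    move=> a b ab; rewrite !inE => /act hb; apply/act.
    have := @inc_mono R N c cinc a b ab; lra.
  rewrite /num_active -(@down_closed_card N _ dc i) inE.
  by split => /act.
split; first exact: cMC.
move=> i j ji; have := cMC i j ji.
have e : forall l, gamma * h l / MC l = 1 - c l / MC l.
  by move=> l; have := MCp l; rewrite /MC => ?; field; lra.
rewrite !e; lra.
Qed.
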